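(* Let $q$ be a prime power, $s,\ell$ positive integers, $\alpha,\beta\in\mathbb{F}_q^*$, let $r$ be the multiplicative order of $\beta$, and assume $q\equiv 1\pmod{r\ell}$. Let $\omega\in\mathbb{F}_q$ be a primitive $r\ell$-th root of unity with $\omega^\ell=\beta$, and for $k=0,1,\dots,\ell-1$ let $$\eta_k(y)=\prod_{\substack{0\le j\le \ell-1\\ j\ne k}}\frac{y-\omega^{1+jr}}{\omega^{1+kr}-\omega^{1+jr}}\in\mathbb{F}_q[y].$$ Let $\mathcal{C}$ be an ideal of $\mathcal{R}=\mathbb{F}_q[x,y]/\langle x^s-\alpha,\,y^\ell-\beta\rangle$. For $j=0,\dots,\ell-1$ let $I_j=\{f(x)\in\mathbb{F}_q[x]/\langle x^s-\alpha\rangle:\ \eta_j(y)f(x)\in\mathcal{C}\}$ (an ideal of $\mathbb{F}_q[x]/\langle x^s-\alpha\rangle$), and let $p_j(x)$ be the unique monic divisor of $x^s-\alpha$ with $I_j=\langle p_j(x)\rangle$. Then $$\mathcal{C}=\big\langle \eta_0(y)p_0(x),\ \eta_1(y)p_1(x),\ \dots,\ \eta_{\ell-1}(y)p_{\ell-1}(x)\big\rangle .$$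
   Context: A two-dimensional $(\alpha,\beta)$-constacyclic code of length $s.\ell$ over $\mathbb{F}_q$ is identified with an ideal of $\mathcal{R}$: an $s\times\ell$ array $(c_{i,j})$ corresponds to $\sum_{i,j}c_{i,j}x^iy^j$. The polynomials $\eta_0,\dots,\eta_{\ell-1}$ are the primitive central idempotents of $\mathbb{F}_q[y]/\langle y^\ell-\beta\rangle$, where $y^\ell-\beta=\prod_{k=0}^{\ell-1}(y-\omega^{1+kr})$. *)

(* Defs.v *)
From HB Require Import structures.
From mathcomp Require Import all_boot all_order all_algebra all_field.
Set Implicit Arguments. Unset Strict Implicit. Unset Printing Implicit Defensive.
Import GRing.Theory.
Local Open Scope ring_scope.

(* Bivariate polynomials F[x,y] are encoded as {poly {poly F}}:
   the outer variable is y, the coefficients are polynomials in x. *)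

Definition inX (F : fieldType) (f : {poly F}) : {poly {poly F}} := f%:P.
Definition inY (F : fieldType) (g : {poly F}) : {poly {poly F}} :=
  map_poly polyC g.

Definition eta_poly (F : fieldType) (w : F) (r l : nat) (k : 'I_l) : {poly F} :=
  \prod_(j < l | j != k)
     (('X - (w ^+ (1 + j * r))%:P) *
      ((w ^+ (1 + k * r) - w ^+ (1 + j * r))^-1)%:P).

Definition is_ideal (R : comNzRingType) (C : R -> Prop) : Prop :=
  [/\ C 0, (forall a b, C a -> C b -> C (a + b)) &
      (forall c a, C a -> C (c * a))].

(* An ideal C of R = F[x,y]/<x^s - alpha, y^l - beta> is represented by its
   preimage in F[x,y], i.e. an ideal of F[x,y] containing x^s-alpha and
   y^l-beta. *)
Definition ideal_of_R (F : fieldType) (s l : nat) (alpha beta : F)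
  (C : {poly {poly F}} -> Prop) : Prop :=
  [/\ is_ideal C, C (inX ('X^s - alpha%:P)) & C (inY ('X^l - beta%:P))].

(* Main.v *)
Require Import Defs.
From HB Require Import structures.
From mathcomp Require Import all_boot all_order all_algebra all_field.
From mathcomp Require Import zify.
Import GRing.Theory.
Set Implicit Arguments. Unset Strict Implicit. Unset Printing Implicit Defensive.
Local Open Scope ring_scope.

Definition om (F : fieldType) (w : F) (r l : nat) (k : 'I_l) : F := w ^+ (1 + k * r).

Lemma eta_fact (F : fieldType) (w : F) (r l : nat) (k : 'I_l) :
  eta_poly w r k = (\prod_(j < l | j != k) (om w r k - om w r j)^-1)%:P *
                   \prod_(j < l | j != k) ('X - (om w r j)%:P).
Proof. by rewrite /eta_poly big_split /= rmorph_prod mulrC. Qed.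

Lemma full_prod (F : fieldType) (w beta : F) (r l : nat) (hl : (0 < l)%N)
  (Hinj : forall i j : 'I_l, om w r i = om w r j -> i = j)
  (Hroot : forall k : 'I_l, om w r k ^+ l = beta) :
  \prod_(j < l) ('X - (om w r j)%:P) = 'X^l - beta%:P.
Proof.
have := @all_roots_prod_XsubC F ('X^l - beta%:P) [seq om w r j | j <- enum 'I_l].
rewrite size_map size_enum_ord size_XnsubC // lead_coefXnsubC // scale1r.
move=> -> //.
- by rewrite big_map big_enum.
- apply/allP => x /mapP [j _ ->]; by rewrite rootE !hornerE Hroot subrr.
- rewrite uniq_rootsE map_inj_uniq ?enum_uniq //; exact: Hinj.
Qed.

Lemma eta_mul (F : fieldType) (w beta : F) (r l : nat) (hl : (0 < l)%N)
  (Hinj : forall i j : 'I_l, om w r i = om w r j -> i = j)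
  (Hroot : forall k : 'I_l, om w r k ^+ l = beta) (k : 'I_l) :
  eta_poly w r k * ('X - (om w r k)%:P) =
  (\prod_(j < l | j != k) (om w r k - om w r j)^-1)%:P * ('X^l - beta%:P).
Proof.
rewrite eta_fact -mulrA -(full_prod hl Hinj Hroot) [\prod_(j < l) _](bigD1 k) //=.
by rewrite [X in _ * X = _]mulrC.
Qed.

Lemma eta_eval (F : fieldType) (w : F) (r l : nat)
  (Hinj : forall i j : 'I_l, om w r i = om w r j -> i = j) (j k : 'I_l) :
  (eta_poly w r j).[om w r k] = (j == k)%:R.
Proof.
rewrite /eta_poly horner_prod.
case: eqP => [<-|/eqP njk].
  apply: big1 => i nij; rewrite !hornerE divff // subr_eq0.
  by apply/eqP => /Hinj E; rewrite E eqxx in nij.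
rewrite (bigD1 k) 1?eq_sym //= !hornerE subrr !mul0r //.
Qed.

Lemma eta_size (F : fieldType) (w beta : F) (r l : nat) (hl : (0 < l)%N)
  (Hinj : forall i j : 'I_l, om w r i = om w r j -> i = j)
  (Hroot : forall k : 'I_l, om w r k ^+ l = beta) (k : 'I_l) :
  (size (eta_poly w r k) <= l)%N.
Proof.
have E := eta_mul hl Hinj Hroot k.
have [->|nz] := eqVneq (eta_poly w r k) 0; first by rewrite size_poly0.
have := size_polyMleq (\prod_(j < l | j != k) (om w r k - om w r j)^-1)%:P ('X^l - beta%:P).
rewrite -E size_mul ?polyXsubC_eq0 // size_XsubC size_XnsubC //.
have := size_polyC_leq1 (\prod_(j < l | j != k) (om w r k - om w r j)^-1).
set a := size _; set b := size _. lia.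
Qed.

Lemma eta_sum (F : fieldType) (w beta : F) (r l : nat) (hl : (0 < l)%N)
  (Hinj : forall i j : 'I_l, om w r i = om w r j -> i = j)
  (Hroot : forall k : 'I_l, om w r k ^+ l = beta) :
  \sum_(j < l) eta_poly w r j = 1.
Proof.
apply/eqP; rewrite -subr_eq0; apply/negPn/negP => nz.
have := max_poly_roots nz (rs := [seq om w r j | j <- enum 'I_l]).
rewrite size_map size_enum_ord.
have -> : all (root (\sum_(j < l) eta_poly w r j - 1)) [seq om w r j | j <- enum 'I_l].
  apply/allP => x /mapP [k _ ->].
  rewrite rootE hornerD hornerN hornerC horner_sum.
  rewrite (eq_bigr (fun j : 'I_l => (j == k)%:R)); last by move=> j _; exact: eta_eval.
  rewrite (bigD1 k) //= eqxx big1 ?addr0 ?subrr // => i /negbTE ->; by [].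
have -> : uniq [seq om w r j | j <- enum 'I_l].
  rewrite map_inj_uniq ?enum_uniq //; exact: Hinj.
move=> /(_ isT isT); apply/negP; rewrite -leqNgt.
apply: leq_trans (size_polyD _ _) _; rewrite size_opp size_polyC oner_neq0 geq_max hl andbT.
elim/big_ind: _ => //; first by rewrite size_poly0.
  by move=> x y hx hy; apply: leq_trans (size_polyD _ _) _; rewrite geq_max hx hy.
move=> j _; exact: (eta_size hl Hinj Hroot).
Qed.

Unset Implicit Arguments.
Set Strict Implicit.

Theorem theorem1 (F : finFieldType) (s l r : nat) (alpha beta w : F)
  (hs : (0 < s)%N) (hl : (0 < l)%N)
  (halpha : alpha != 0) (hbeta : beta != 0)
  (hr : r.-primitive_root beta)
  (hq : (#|F| = 1 %[mod r * l])%N)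
  (hw : (r * l).-primitive_root w) (hwl : w ^+ l = beta)
  (C : {poly {poly F}} -> Prop)
  (hC : ideal_of_R s l alpha beta C)
  (p : 'I_l -> {poly F})
  (hpmonic : forall j, p j \is monic)
  (hpdiv : forall j, p j %| 'X^s - alpha%:P)
  (hpI : forall j (f : {poly F}),
           C (inY (eta_poly w r j) * inX f) <-> p j %| f) :
  forall P : {poly {poly F}},
    C P <->
    exists (a : 'I_l -> {poly {poly F}}) (b c : {poly {poly F}}),
      P = \sum_(j < l) a j * (inY (eta_poly w r j) * inX (p j))
          + b * inX ('X^s - alpha%:P) + c * inY ('X^l - beta%:P).
Proof.
case: hC => hI CX CY; case: hI => C0 CD CM P.
have r0 := prim_order_gt0 hr.
have Hroot : forall k : 'I_l, om w r k ^+ l = beta.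
  move=> k; rewrite /om -exprM mulnDl mul1n exprD hwl -mulnA (mulnC k) exprM.
  by rewrite (prim_expr_order hw) expr1n mulr1.
have Hinj : forall i j : 'I_l, om w r i = om w r j -> i = j.
  move=> i j /eqP; rewrite /om (eq_prim_root_expr hw) eqn_modDl.
  rewrite !modn_small; last 2 first.
  - by rewrite mulnC ltn_pmul2l.
  - by rewrite mulnC ltn_pmul2l.
  by rewrite eqn_pmul2r // => /eqP/val_inj.
split => [CP|[a [b [c ->]]]]; last first.
  apply: (CD); last by apply: (CM).
  apply: (CD); last by apply: (CM).
  elim/big_ind: _ => //; move=> j _; apply: (CM); apply/hpI; exact: dvdpp.
pose f (j : 'I_l) := P.[(om w r j)%:P].
have [q Hq] : exists q : 'I_l -> {poly {poly F}},
    forall j, P - (f j)%:P = q j * ('X - (om w r j)%:P%:P).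
  have ex (j : 'I_l) : exists q0, P - (f j)%:P == q0 * ('X - (om w r j)%:P%:P).
    have /factor_theorem [q0 ->] : root (P - (f j)%:P) (om w r j)%:P; last by exists q0.
    by rewrite rootE hornerD hornerN hornerC subrr.
  by exists (fun j => xchoose (ex j)) => j; exact/eqP/(xchooseP (ex j)).
pose ka (j : 'I_l) := (\prod_(i < l | i != j) (om w r j - om w r i)^-1).
have H2 (j : 'I_l) : inY (eta_poly w r j) * ('X - (om w r j)%:P%:P) =
            inY (ka j)%:P * inY ('X^l - beta%:P).
  by rewrite /inY -rmorphM -(eta_mul hl Hinj Hroot) rmorphM /= map_polyXsubC.
have E2 (j : 'I_l) : inY (eta_poly w r j) * P =
   inY (eta_poly w r j) * inX (f j) + q j * (inY (ka j)%:P * inY ('X^l - beta%:P)).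
  rewrite -H2 mulrA (mulrC (q j)) -mulrA -Hq /inX mulrBr addrC subrK //.
have Cf (j : 'I_l) : C (inY (eta_poly w r j) * inX (f j)).
  have -> : inY (eta_poly w r j) * inX (f j) = inY (eta_poly w r j) * P
     + (- (q j * inY (ka j)%:P)) * inY ('X^l - beta%:P).
    by rewrite E2 mulNr mulrA addrK.
  by apply: (CD); apply: (CM).
have [g Hg] : exists g : 'I_l -> {poly F}, forall j, f j = g j * p j.
  have ex (j : 'I_l) : exists g0, f j == g0 * p j.
    have /dvdpP [g0 ->] : p j %| f j by exact/hpI.
    by exists g0.
  by exists (fun j => xchoose (ex j)) => j; exact/eqP/(xchooseP (ex j)).
exists (fun j => inX (g j)), 0, (\sum_(j < l) q j * inY (ka j)%:P).
rewrite mul0r addr0 mulr_suml -big_split /=.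
have S1 : \sum_(j < l) inY (eta_poly w r j) = 1.
  by rewrite /inY -rmorph_sum (eta_sum hl Hinj Hroot) rmorph1.
rewrite -{1}[P]mul1r -S1 mulr_suml; apply: eq_bigr => j _.
rewrite E2 Hg /inX polyCM mulrCA !mulrA.
done.
Qed.
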